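(* For all real $x\ge 1$ and $\sigma>0$, if $X\sim\mathcal{N}_{\mathbb{Z}}(\sigma^2)$ and $Y\sim\mathcal{N}(0,\sigma^2)$ (the continuous Gaussian with mean $0$ and variance $\sigma^2$), then $\Pr[X>x]\le\Pr[Y>\lfloor x\rfloor]$.
   Context: The discrete Gaussian distribution $\mathcal{N}_{\mathbb{Z}}(\sigma^2)$ centered at $0$ is the distribution on $\mathbb{Z}$ with $\Pr[X=x]=e^{-x^2/(2\sigma^2)}/\sum_{u\in\mathbb{Z}}e^{-u^2/(2\sigma^2)}$ for $x\in\mathbb{Z}$. *)

(* Defs.v *)
From HB Require Import structures.
From mathcomp Require Import all_boot all_order all_algebra.
From mathcomp Require Import all_classical all_reals all_analysis.
Set Implicit Arguments. Unset Strict Implicit. Unset Printing Implicit Defensive.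
Import Order.TTheory GRing.Theory Num.Theory.
Local Open Scope classical_set_scope.
Local Open Scope ring_scope.

Definition dgauss_weight {R : realType} (sigma : R) (k : int) : R :=
  expR (- (k%:~R) ^+ 2 / (sigma ^+ 2 *+ 2)).

Definition dgauss_prob {R : realType} (sigma : R) (A : set int) : \bar R :=
  ((\esum_(k in A) (dgauss_weight sigma k)%:E) *
   ((fine (\esum_(u in [set: int]) (dgauss_weight sigma u)%:E))^-1)%:E)%E.

(* Main.v *)
Require Import Defs.
From HB Require Import structures.
From mathcomp Require Import all_boot all_order all_algebra.
From mathcomp Require Import all_classical all_reals all_analysis.
From mathcomp Require Import measurable_realfun.
From mathcomp.algebra_tactics Require Import ring lra.
From mathcomp Require Import zify.
Import Order.TTheory GRing.Theory Num.Theory.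
Import numFieldNormedType.Exports.
Local Open Scope classical_set_scope.
Local Open Scope ring_scope.

Section S.
Variable R : realType.
Notation mu := (@lebesgue_measure R).

Lemma shift_derive1 (d : R) : (shift d : R -> R)^`()%classic = cst 1.
Proof. by apply/funext => x; rewrite derive1E deriveD// derive_id derive_cst addr0. Qed.

Lemma translate (f : R -> R) (a b d : R) : a <= b -> continuous f ->
  (\int[mu]_(x in `[(a + d)%R, (b + d)%R]) (f x)%:E =
   \int[mu]_(x in `[a, b]) (f (x + d))%:E)%E.
Proof.
move=> ab cf.
have := @integration_by_substitution_increasing R (shift d) f a b ab.
rewrite shift_derive1 /=.
move=> -> //.
- by apply: eq_integral => y _; rewrite mulr1.
- by move=> y z _ _ yz; rewrite ltrD2r.
- by move=> y _; exact: cvg_cst.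
- exact: is_cvg_cst.
- exact: is_cvg_cst.
- split.
  + by move=> y _; apply: derivableD.
  + apply: cvg_at_right_filter; apply: cvgD; [exact: cvg_id|exact: cvg_cst].
  + apply: cvg_at_left_filter; apply: cvgD; [exact: cvg_id|exact: cvg_cst].
- by move=> y; apply: continuous_subspaceT.
Qed.

Variable sigma : R.
Hypothesis s0 : 0 < sigma.
Let s0' : sigma != 0. Proof. by rewrite gt_eqF. Qed.
Definition rho (k : int) := dgauss_weight sigma k.
Let nu := normal_pdf 0 sigma.

Lemma cont_nu : continuous nu.
Proof. exact: continuous_normal_pdf. Qed.

Lemma meas_nu (A : set R) : measurable_fun A (fun t => (nu t)%:E).
Proof. by apply/measurable_funTS/measurable_EFinP; exact: measurable_normal_pdf. Qed.

Lemma nuE t : nu t = normal_peak sigma * expR (- t ^+ 2 / (sigma ^+ 2 *+ 2)).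
Proof. by rewrite /nu normal_pdfE //= /normal_fun subr0. Qed.

Lemma cont_nu_shift d : continuous (fun t => nu (t + d)).
Proof.
move=> t.
have h : {for t, continuous (fun x : R => x + d)}.
  by apply: cvgD; [exact: cvg_id|exact: cvg_cst].
exact: (continuous_comp h (cont_nu _)).
Qed.

Lemma meas_nu_shift (A : set R) d : measurable_fun A (fun t => (nu (t + d))%:E).
Proof.
apply: measurable_funTS; apply/measurable_EFinP.
exact: (continuous_measurable_fun (cont_nu_shift d)).
Qed.

Lemma pair_le (j k : int) : (j < k)%R ->
  ((rho k)%:E * normal_prob 0 sigma `](j%:~R - 1)%R, j%:~R]
   <= (rho j)%:E * normal_prob 0 sigma `](k%:~R - 1)%R, k%:~R])%E.
Proof.
move=> jk; rewrite /normal_prob -/nu.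
rewrite !integral_itv_obnd_cbnd; [|exact: meas_nu..].
set d : R := (k - j)%:~R.
have kE : (k%:~R : R) = j%:~R + d by rewrite /d intrB addrC subrK.
have d0 : (0 <= d)%R by rewrite /d ler0z subr_ge0 ltW.
rewrite kE (_ : (j%:~R + d - 1 = (j%:~R - 1) + d)%R); last by rewrite addrAC.
rewrite translate; last 2 first.
- by rewrite lerBlDr lerDl.
- exact: cont_nu.
rewrite -!ge0_integralZl_EFin //.
all: try (by move=> t _; rewrite lee_fin normal_pdf_ge0).
all: try (by rewrite /rho /dgauss_weight expR_ge0).
all: try (exact: meas_nu).
all: try (exact: meas_nu_shift).
apply: ge0_le_integral => //.
- by move=> t _; rewrite lee_fin mulr_ge0 ?expR_ge0 ?normal_pdf_ge0.
- apply/measurable_funTS/measurable_EFinP/measurable_funM => //.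
  exact: measurable_normal_pdf.
- apply/measurable_funTS/measurable_EFinP/measurable_funM => //.
  apply: continuous_measurable_fun.
  exact: cont_nu_shift.

move=> t; rewrite /= in_itv /= => /andP[_ tj].
rewrite lee_fin !nuE /rho /dgauss_weight kE !mulrA ![_ * normal_peak _]mulrC -!mulrA.
rewrite ler_wpM2l ?normal_peak_ge0 // -!expRD ler_expR.
rewrite -!mulrDl ler_pM2r; last by rewrite invr_gt0 pmulrn_lgt0 // exprn_gt0.
nra.
Qed.

Definition g (i : int) := normal_prob 0 sigma `]((i%:~R : R) - 1)%R, i%:~R].

Lemma g_ge0 i : (0 <= g i)%E.
Proof. exact: measure_ge0. Qed.

Lemma rho_ge0 k : 0 <= rho k.
Proof. exact: expR_ge0. Qed.

Variable n : int.
Definition K (m : nat) : int := n + 1 + m%:Z.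
Definition J (m : nat) : int := n - m%:Z.

Lemma K_inj : set_inj setT K.
Proof. by move=> a b _ _; rewrite /K => h; lia. Qed.
Lemma J_inj : set_inj setT J.
Proof. by move=> a b _ _; rewrite /J => h; lia. Qed.

Lemma esum_K (A : set int) : A = K @` setT ->
  \esum_(k in A) (rho k)%:E = (\sum_(m <oo) (rho (K m))%:E)%E.
Proof.
move=> ->; rewrite esum_image; last exact: K_inj.
by rewrite nneseries_esumT // => m; rewrite lee_fin rho_ge0.
Qed.

Lemma esum_J (A : set int) : A = J @` setT ->
  \esum_(k in A) (rho k)%:E = (\sum_(m <oo) (rho (J m))%:E)%E.
Proof.
move=> ->; rewrite esum_image; last exact: J_inj.
by rewrite nneseries_esumT // => m; rewrite lee_fin rho_ge0.
Qed.

Lemma seriesT (F : nat -> \bar R) :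
  (\sum_(i <oo | i \in [set: nat]) F i = \sum_(i <oo) F i)%E.
Proof.
by apply: eq_eseriesl => i; rewrite in_setT.
Qed.

Lemma betaE : normal_prob 0 sigma `](n%:~R : R), +oo[ = (\sum_(m <oo) g (K m))%E.
Proof.
rewrite (_ : `](n%:~R : R), +oo[%classic =
   \bigcup_(m in setT) `](((K m)%:~R : R) - 1)%R, (K m)%:~R]%classic); last first.
  apply/seteqP; split => [t /= | t [m _ /=]].
    rewrite in_itv /= andbT => nt.
    have [c1 c2] := andP (ceil_itv t).
    have nc : n < Num.ceil t.
      by rewrite -(ltr_int R); apply: lt_le_trans c2.
    exists (absz (Num.ceil t - n - 1)%R) => //=.
    have -> : K (absz (Num.ceil t - n - 1)%R) = Num.ceil t by rewrite /K; lia.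
    by move: c1; rewrite intrB => c1; rewrite in_itv /= c1 c2.
  rewrite !in_itv /= andbT => /andP[h1 _]; apply: le_lt_trans h1.
  by rewrite lerBrDr -(intrD _ _ 1) ler_int /K; lia.
rewrite measure_bigcup //= ?seriesT //.
move=> a b _ _ [t [/=]]; rewrite !in_itv /= => /andP[a1 a2] /andP[b1 b2].
have h1 : K a - 1 < K b.
  by rewrite -(ltr_int R) intrB; apply: lt_le_trans b2; exact: lt_le_trans a1 _.
have h2 : K b - 1 < K a.
  by rewrite -(ltr_int R) intrB; apply: lt_le_trans a2; exact: lt_le_trans b1 _.
by move: h1 h2; rewrite /K; lia.
Qed.


Lemma gammaE : normal_prob 0 sigma `]-oo, (n%:~R : R)] = (\sum_(m <oo) g (J m))%E.
Proof.
rewrite (_ : `]-oo, (n%:~R : R)]%classic =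
   \bigcup_(m in setT) `](((J m)%:~R : R) - 1)%R, (J m)%:~R]%classic); last first.
  apply/seteqP; split => [t /= | t [m _ /=]].
    rewrite in_itv /= => nt.
    have [c1 c2] := andP (ceil_itv t).
    have nc : Num.ceil t <= n.
      by rewrite ceil_le_int.
    exists (absz (n - Num.ceil t)%R) => //=.
    have -> : J (absz (n - Num.ceil t)%R) = Num.ceil t by rewrite /J; lia.
    by move: c1; rewrite intrB => c1; rewrite in_itv /= c1 c2.
  rewrite !in_itv /= => /andP[_ h1]; apply: le_trans h1 _.
  by rewrite ler_int /J; lia.
rewrite measure_bigcup //= ?seriesT //.
move=> a b _ _ [t [/=]]; rewrite !in_itv /= => /andP[a1 a2] /andP[b1 b2].
have h1 : J a - 1 < J b.
  by rewrite -(ltr_int R) intrB; apply: lt_le_trans b2; exact: lt_le_trans a1 _.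
have h2 : J b - 1 < J a.
  by rewrite -(ltr_int R) intrB; apply: lt_le_trans a2; exact: lt_le_trans b1 _.
by move: h1 h2; rewrite /J; lia.
Qed.

Lemma disj_itv (r : R) : `]r, +oo[ `&` `]-oo, r] = set0 :> set R.
Proof.
apply/seteqP; split => // t /=; rewrite !in_itv /= andbT => -[h1 h2].
by move: (lt_le_trans h1 h2); rewrite ltxx.
Qed.

Lemma cup_itv (r : R) : `]r, +oo[ `|` `]-oo, r] = setT :> set R.
Proof.
apply/seteqP; split => // t _ /=; rewrite !in_itv /= andbT.
by case: (ltP r t) => h; [left|right].
Qed.

Lemma split1 : (normal_prob 0 sigma `](n%:~R : R), +oo[ +
               normal_prob 0 sigma `]-oo, (n%:~R : R)] = 1)%E.
Proof.
rewrite -measureU //; last exact: disj_itv.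
rewrite cup_itv /normal_prob. exact: integral_normal_pdf.
Qed.

Lemma beta_fin : normal_prob 0 sigma `](n%:~R : R), +oo[ \is a fin_num.
Proof.
rewrite ge0_fin_numE ?measure_ge0 //; apply: (@le_lt_trans _ _ 1%E) => //; last exact: ltry.
by rewrite -split1 leeDl // measure_ge0.
Qed.

Lemma gamma_fin : normal_prob 0 sigma `]-oo, (n%:~R : R)] \is a fin_num.
Proof.
rewrite ge0_fin_numE ?measure_ge0 //; apply: (@le_lt_trans _ _ 1%E) => //; last exact: ltry.
by rewrite -split1 leeDr // measure_ge0.
Qed.

Lemma key_ineq :
  ((\sum_(m <oo) (rho (K m))%:E) * normal_prob 0 sigma `]-oo, (n%:~R : R)] <=
   (\sum_(m <oo) (rho (J m))%:E) * normal_prob 0 sigma `](n%:~R : R), +oo[)%E.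
Proof.
rewrite -(fineK gamma_fin) -(fineK beta_fin) muleC [X in (_ <= X)%E]muleC.
rewrite -!nneseriesZl; last 2 first.
- by move=> i _; rewrite lee_fin rho_ge0.
- by move=> i _; rewrite lee_fin rho_ge0.
rewrite (@eq_eseriesr _ _ (fun m => \sum_(l <oo) (rho (K m))%:E * g (J l))%E); last first.
  by move=> m _; rewrite fineK ?gamma_fin // muleC gammaE nneseriesZl // => l _; exact: g_ge0.
rewrite [X in (_ <= X)%E](@eq_eseriesr _ _ (fun l => \sum_(m <oo) (rho (J l))%:E * g (K m))%E); last first.
  by move=> l _; rewrite fineK ?beta_fin // muleC betaE nneseriesZl // => m _; exact: g_ge0.
rewrite [X in (_ <= X)%E]nneseries_interchange; last first.
  by move=> i j; rewrite mule_ge0 ?g_ge0 // lee_fin rho_ge0.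
apply: lee_nneseries.
  by move=> i _ _; apply: nneseries_ge0 => j _; rewrite mule_ge0 ?g_ge0 // lee_fin rho_ge0.
move=> m _; apply: lee_nneseries.
  by move=> i _ _; rewrite mule_ge0 ?g_ge0 // lee_fin rho_ge0.
move=> l _; apply: pair_le.
by rewrite /J /K; lia.
Qed.

End S.

Theorem mainTheorem5 (R : realType) (x sigma : R) :
  1 <= x -> 0 < sigma ->
  (dgauss_prob sigma [set k : int | (x < k%:~R)%R]
   <= normal_prob 0 sigma `](Num.floor x)%:~R, +oo[)%E.
Proof.
move=> _ s0.
set n := Num.floor x.
have TE : [set k : int | (x < k%:~R)%R] = K n @` setT.
  apply/seteqP; split => [k /= xk | _ [m _ <-]] /=.
    have nk : n < k by rewrite /n floor_lt_int.
    by exists (absz (k - n - 1)%R) => //; rewrite /K; lia.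
  by rewrite -floor_lt_int -/n /K; lia.
have CE : ~` [set k : int | (x < k%:~R)%R] = J n @` setT.
  apply/seteqP; split => [k /= xk | _ [m _ <-]] /=.
    have nk : k <= n by rewrite /n floor_ge_int leNgt; apply/negP.
    by exists (absz (n - k)%R) => //; rewrite /J; lia.
  apply/negP; rewrite -leNgt -floor_ge_int -/n /J; lia.
have tot := esumID [set k : int | (x < k%:~R)%R] setT (fun k => (dgauss_weight sigma k)%:E).
rewrite !setTI in tot.
rewrite /dgauss_prob tot; last by move=> k _; rewrite lee_fin expR_ge0.
rewrite (@esum_K _ _ s0 _ _ TE) (@esum_J _ _ s0 _ _ CE).
set A := (\sum_(m <oo) _)%E; set C := (\sum_(m <oo) _)%E.
have A0 : (0 <= A)%E by apply: nneseries_ge0 => i _; rewrite lee_fin expR_ge0.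
have C0 : (0 <= C)%E by apply: nneseries_ge0 => i _; rewrite lee_fin expR_ge0.
have key : (A * normal_prob 0 sigma `]-oo, (n%:~R : R)] <=
   C * normal_prob 0 sigma `](n%:~R : R), +oo[)%E := @key_ineq _ _ s0 n.
have sp := @split1 _ sigma n.
have bf := @beta_fin _ sigma n.
have gf := @gamma_fin _ sigma n.
case: (boolP ((A + C)%E \is a fin_num)) => fin; last first.
  have -> : (A + C)%E = +oo%E.
    case/fin_numPn: fin => // h.
    by move: (adde_ge0 A0 C0); rewrite h.
  by rewrite /= invr0 mule0 measure_ge0.
move: fin; rewrite fin_numD => /andP[Af Cf].
move: key sp A0 C0.
rewrite -(fineK Af) -(fineK Cf) -(fineK bf) -(fineK gf).
set a := fine A; set c := fine C.
set b := fine (normal_prob 0 sigma `](n%:~R : R), +oo[).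
set gm := fine (normal_prob 0 sigma `]-oo, (n%:~R : R)]).
rewrite -!EFinM -EFinD !lee_fin /= => key sp a0 c0.
have sp' : b + gm = 1 by have := congr1 fine sp.
have [ac0|ac0] := eqVneq (a + c) 0.
  by rewrite ac0 invr0 mulr0 -lee_fin (fineK bf) measure_ge0.
have acp : 0 < a + c by rewrite lt_neqAle eq_sym ac0 addr_ge0.
rewrite ler_pdivrMr //.
nra.
Qed.
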